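(* Consider an electrical circuit, modeled as described in the context, in which the elastance $E_m$ of $q$-memristors and the reluctance $\mathcal{R}_w$ of $\varphi$-memristors vanish at equilibria. Suppose that at a given equilibrium the resistance and conductance matrices $R$, $G$ are positive definite and the elastance $E_c$ of capacitors and the reluctance $\mathcal{R}_l$ of inductors are non-singular. Then the geometric multiplicity of the null eigenvalue (of the linearization at that equilibrium) equals the number of memristors ($q$- and $\varphi$-memristors) plus the number of independent VL-loops plus the number of independent IC-cutsets.
   Context: Circuit setting. The circuit has an underlying digraph $\mathcal{G}$ with $n$ nodes, $m$ branches and $k$ connected components. A cutset is a set of branches whose removal increases the number of connected components and which is minimal with this property; a loop is a cycle of branches. Let $B$ be a reduced loop matrix (full-row-rank set of rows of the loop matrix, entries $1,-1,0$ according as a branch is in a loop with the same orientation, opposite orientation, or not at all) and $D$ a reduced cutset matrix (analogous with oriented cutsets), with columns in the same branch order. For a set of branches $K$, $B_K$, $D_K$ are the submatrices of columns of branches in $K$; the number of independent cutsets formed only by branches of $K$ is $\dim\ker B_K$, and the number of independent loops formed only by branches of $K$ is $\dim\ker D_K$. Each branch carries a voltage $v$ and current $i$ and belongs to one of eight classes. $q$-devices ($v=\eta(q,i,t)$, $C^1$): $q$-memristors $v_m=\eta_1(q_m,i_m,t)$ (with $\partial\eta_1/\partial q_m\not\equiv0$, $\partial\eta_1/\partial i_m\not\equiv0$), capacitors $v_c=\eta_2(q_c,t)$, current-controlled resistors $v_r=\eta_3(i_r,t)$, voltage sources $v_u=\eta_4(t)$. $\varphi$-devices ($i=\zeta(\varphi,v,t)$,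 $C^1$): $\varphi$-memristors $i_w=\zeta_1(\varphi_w,v_w,t)$ (with $\partial\zeta_1/\partial\varphi_w\not\equiv0$, $\partial\zeta_1/\partial v_w\not\equiv0$), inductors $i_l=\zeta_2(\varphi_l,t)$, voltage-controlled resistors $i_g=\zeta_3(v_g,t)$, current sources $i_j=\zeta_4(t)$. Maps may be vector-valued. With $B=(B_q\ B_\varphi)$, $D=(D_q\ D_\varphi)$ split by $q$- and $\varphi$-devices, and $q_{mc}=(q_m,q_c)$, $\varphi_{wl}=(\varphi_w,\varphi_l)$, the circuit is modeled by the semiexplicit differential-algebraic system $q_{mc}'=i_{mc}$, $\varphi_{wl}'=v_{wl}$, $0=v_q-f(q_{mc},i_q,t)$, $0=i_\varphi-g(\varphi_{wl},v_\varphi,t)$, $0=B_qv_q+B_\varphi v_\varphi$, $0=D_qi_q+D_\varphi i_\varphi$, where $f$ collects $\eta_1,\dots,\eta_4$ and $g$ collects $\zeta_1,\dots,\zeta_4$. An equilibrium point is a point at which all right-hand sides vanish. The linearization at an equilibrium is the matrix pencil $\lambda H-K$, where $K$ is the Jacobian of the right-hand sides with respect to $(q_{mc},\varphi_{wl},v_q,i_q,v_\varphi,i_\varphi)$ at the equilibrium and $H=\mathrm{block\text{-}diag}\{I,0\}$ (identity on the differential variables $q_{mc},\varphi_{wl}$); the geometric multiplicity of the null eigenvalue is $\dim\ker K$. Characteristic matrices: resistance $R=\partial\eta_3/\partial i_r$, conductance $G=\partial\zeta_3/\partial v_g$, elastances $E_m=\partial\eta_1/\partial q_m$, $E_c=\partial\eta_2/\partial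 q_c$, reluctances $\mathcal{R}_w=\partial\zeta_1/\partial\varphi_w$, $\mathcal{R}_l=\partial\zeta_2/\partial\varphi_l$. A square matrix $P$ is positive definite if $u^TPu>0$ for all $u\ne0$ (symmetry not assumed). A VL-loop is a loop consisting only of voltage sources and/or inductors; an IC-cutset is a cutset consisting only of current sources and/or capacitors. *)

(* Defs.v *)
From HB Require Import structures.
From mathcomp Require Import all_boot all_order all_algebra.
From mathcomp Require Import all_classical all_reals all_analysis.
Set Implicit Arguments. Unset Strict Implicit. Unset Printing Implicit Defensive.
Import Order.TTheory GRing.Theory Num.Theory.
Local Open Scope ring_scope.

Section Graph.
Variables (R : realType) (n m : nat) (src tgt : 'I_m -> 'I_n).

Definition adjb (X : {set 'I_m}) : rel 'I_n :=
  fun u v => [exists e in X, ((src e == u) && (tgt e == v))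
                          || ((src e == v) && (tgt e == u))].

Definition ncomp (X : {set 'I_m}) : nat := n_comp (adjb X) predT.

Definition is_cutset (C : {set 'I_m}) : bool :=
  (ncomp [set: 'I_m] < ncomp (~: C))%N &&
  [forall C' : {set 'I_m}, (C' \proper C) ==> ~~ (ncomp [set: 'I_m] < ncomp (~: C'))%N].

Definition cutset_vec (u : 'rV[R]_m) : Prop :=
  exists (C : {set 'I_m}) (S : {set 'I_n}),
    [/\ is_cutset C,
        (forall e, (e \in C) = ((src e \in S) != (tgt e \in S))) &
        u = \row_e (if e \in C then (if src e \in S then 1 else -1) else 0)].

(* a loop is a closed walk through distinct branches and distinct nodes;
   a step (e, true) traverses e from src to tgt, (e, false) from tgt to src *)
Definition step_start (s : 'I_m * bool) : 'I_n := if s.2 then src s.1 else tgt s.1.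
Definition step_end (s : 'I_m * bool) : 'I_n := if s.2 then tgt s.1 else src s.1.

Definition is_loop (p : seq ('I_m * bool)) : bool :=
  [&& (0 < size p)%N, uniq (map fst p), uniq (map step_start p)
    & cycle (fun s1 s2 => step_end s1 == step_start s2) p].

Definition loop_vec (u : 'rV[R]_m) : Prop :=
  exists p, is_loop p /\
    u = \row_e (\sum_(s <- p | s.1 == e) (if s.2 then 1 else -1)).

Definition reduced_loop_matrix r (B : 'M[R]_(r, m)) : Prop :=
  [/\ row_free B, (forall i, loop_vec (row i B)) &
      (forall u, loop_vec u -> (u <= B)%MS)].

Definition reduced_cutset_matrix r (D : 'M[R]_(r, m)) : Prop :=
  [/\ row_free D, (forall i, cutset_vec (row i D)) &
      (forall u, cutset_vec u -> (u <= D)%MS)].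
End Graph.

Definition subcols (R : Type) r m (K : {set 'I_m}) (M : 'M[R]_(r, m)) : 'M[R]_(r, #|K|) :=
  colsub (fun j : 'I_#|K| => enum_val j) M.

(* dim ker M, M acting on column vectors *)
Definition dimker (R : fieldType) r c (M : 'M[R]_(r, c)) : nat := \rank (kermx M^T).

(* standard Jacobian matrix (rows = components of f) *)
Definition jac (R : realType) a b (f : 'rV[R]_a -> 'rV[R]_b) (p : 'rV[R]_a) : 'M[R]_(b, a) :=
  (jacobian f p)^T.

Definition posdef (R : realType) k (P : 'M[R]_k) : Prop :=
  forall u : 'rV[R]_k, u != 0 -> 0 < (u *m P *m u^T) 0 0.

(* Branch ordering: q-devices first (q-memristors nm, capacitors nc,   *)
(* current-controlled resistors nr, voltage sources nu), then          *)
(* phi-devices (phi-memristors nw, inductors nl, voltage-controlled    *)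
(* resistors ng, current sources nj).                                  *)
Notation nbr4 a b c d := ((a + b) + (c + d))%N.

Definition brange M (a b : nat) : {set 'I_M} := [set e : 'I_M | (a <= e < b)%N].

Definition VLset nm nc nr nu nw nl ng nj : {set 'I_(nbr4 nm nc nr nu + nbr4 nw nl ng nj)} :=
  brange _ (nm + nc + nr) (nbr4 nm nc nr nu)
  :|: brange _ (nbr4 nm nc nr nu + nw) (nbr4 nm nc nr nu + nw + nl).
Definition ICset nm nc nr nu nw nl ng nj : {set 'I_(nbr4 nm nc nr nu + nbr4 nw nl ng nj)} :=
  brange _ nm (nm + nc)
  :|: brange _ (nbr4 nm nc nr nu + nw + nl + ng) (nbr4 nm nc nr nu + nbr4 nw nl ng nj).

(* The Jacobian K of the right-hand sides w.r.t.                       *)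
(*   (q_mc, phi_wl, v_q, i_q, v_phi, i_phi)   (columns, in this order)  *)
(* for the equations (rows, in this order)                             *)
(*   q_mc' = i_mc ; phi_wl' = v_wl ; 0 = v_q - f ; 0 = i_phi - g ;     *)
(*   0 = B_q v_q + B_phi v_phi ; 0 = D_q i_q + D_phi i_phi,            *)
(* written blockwise in terms of the partial Jacobians of the devices: *)
(*   Em = d eta1/d q_m, Zm = d eta1/d i_m, Ec = d eta2/d q_c,          *)
(*   Rr = d eta3/d i_r, Rw = d zeta1/d phi_w, Yw = d zeta1/d v_w,      *)
(*   Rl = d zeta2/d phi_l, Gg = d zeta3/d v_g.                         *)
Section Lin.
Variables (R : realType) (nm nc nr nu nw nl ng nj rb rd : nat).
Variables (Em Zm : 'M[R]_nm) (Ec : 'M[R]_nc) (Rr : 'M[R]_nr)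
          (Rw Yw : 'M[R]_nw) (Rl : 'M[R]_nl) (Gg : 'M[R]_ng).
Variables (B : 'M[R]_(rb, nbr4 nm nc nr nu + nbr4 nw nl ng nj))
          (D : 'M[R]_(rd, nbr4 nm nc nr nu + nbr4 nw nl ng nj)).

(* d f / d q_mc  and  d f / d i_q *)
Definition Fq : 'M[R]_(nbr4 nm nc nr nu, nm + nc) :=
  col_mx (block_mx Em 0 0 Ec) 0.
Definition Fi : 'M[R]_(nbr4 nm nc nr nu, nbr4 nm nc nr nu) :=
  block_mx (block_mx Zm 0 0 0) 0 0 (block_mx Rr 0 0 0).
(* d g / d phi_wl  and  d g / d v_phi *)
Definition Gp : 'M[R]_(nbr4 nw nl ng nj, nw + nl) :=
  col_mx (block_mx Rw 0 0 Rl) 0.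
Definition Gv : 'M[R]_(nbr4 nw nl ng nj, nbr4 nw nl ng nj) :=
  block_mx (block_mx Yw 0 0 0) 0 0 (block_mx Gg 0 0 0).

Definition linK :
  'M[R]_((nm + nc) + ((nw + nl) + (nbr4 nm nc nr nu + (nbr4 nw nl ng nj + (rb + rd)))),
         (nm + nc) + ((nw + nl) + (nbr4 nm nc nr nu + (nbr4 nm nc nr nu
                     + (nbr4 nw nl ng nj + nbr4 nw nl ng nj))))) :=
  col_mx
   (row_mx 0 (row_mx 0 (row_mx 0 (row_mx (row_mx 1%:M 0) (row_mx 0 0)))))
  (col_mx
   (row_mx 0 (row_mx 0 (row_mx 0 (row_mx 0 (row_mx (row_mx 1%:M 0) 0)))))
  (col_mx
   (row_mx (- Fq) (row_mx 0 (row_mx 1%:M (row_mx (- Fi) (row_mx 0 0)))))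
  (col_mx
   (row_mx 0 (row_mx (- Gp) (row_mx 0 (row_mx 0 (row_mx (- Gv) 1%:M)))))
  (col_mx
   (row_mx 0 (row_mx 0 (row_mx (lsubmx B) (row_mx 0 (row_mx (rsubmx B) 0)))))
   (row_mx 0 (row_mx 0 (row_mx 0 (row_mx (lsubmx D) (row_mx 0 (rsubmx D)))))))))).
End Lin.

(* Equilibrium of the semiexplicit DAE at time t0:  the point          *)
(*   (q_mc, phi_wl, v_q, i_q, v_phi, i_phi)                            *)
(* annihilates all right-hand sides.  Splitting conventions:           *)
(*   q_mc = (q_m, q_c), phi_wl = (phi_w, phi_l),                       *)
(*   v_q, i_q split as ((m, c), (r, u)), v_phi, i_phi as ((w, l), (g, j)). *)
Definition equilibrium (R : realType) (nm nc nr nu nw nl ng nj rb rd : nat)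
  (B : 'M[R]_(rb, nbr4 nm nc nr nu + nbr4 nw nl ng nj))
  (D : 'M[R]_(rd, nbr4 nm nc nr nu + nbr4 nw nl ng nj))
  (eta1 : 'rV[R]_nm -> 'rV[R]_nm -> R -> 'rV[R]_nm)
  (eta2 : 'rV[R]_nc -> R -> 'rV[R]_nc)
  (eta3 : 'rV[R]_nr -> R -> 'rV[R]_nr)
  (eta4 : R -> 'rV[R]_nu)
  (zeta1 : 'rV[R]_nw -> 'rV[R]_nw -> R -> 'rV[R]_nw)
  (zeta2 : 'rV[R]_nl -> R -> 'rV[R]_nl)
  (zeta3 : 'rV[R]_ng -> R -> 'rV[R]_ng)
  (zeta4 : R -> 'rV[R]_nj)
  (qmc : 'rV[R]_(nm + nc)) (pwl : 'rV[R]_(nw + nl))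
  (vq iq : 'rV[R]_(nbr4 nm nc nr nu)) (vp ip : 'rV[R]_(nbr4 nw nl ng nj)) (t0 : R) : Prop :=
  [/\ lsubmx iq = 0 /\
      lsubmx vp = 0,
      vq = row_mx (row_mx (eta1 (lsubmx qmc) (lsubmx (lsubmx iq)) t0)
                          (eta2 (rsubmx qmc) t0))
                  (row_mx (eta3 (lsubmx (rsubmx iq)) t0) (eta4 t0)),
      ip = row_mx (row_mx (zeta1 (lsubmx pwl) (lsubmx (lsubmx vp)) t0)
                          (zeta2 (rsubmx pwl) t0))
                  (row_mx (zeta3 (lsubmx (rsubmx vp)) t0) (zeta4 t0)),
      B *m (row_mx vq vp)^T = 0 &
      D *m (row_mx iq ip)^T = 0].

(* Main.v *)
Require Import Defs.
From HB Require Import structures.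
From mathcomp Require Import all_boot all_order all_algebra.
From mathcomp Require Import all_classical all_reals all_analysis.
Import Order.TTheory GRing.Theory Num.Theory numFieldNormedType.Exports.
Local Open Scope ring_scope.

Module Aux.
From mathcomp Require Import fintype finset.
From mathcomp Require Import ring lra zify.
Import Order.TTheory GRing.Theory Num.Theory numFieldNormedType.Exports.
Set Implicit Arguments. Unset Strict Implicit. Unset Printing Implicit Defensive.
Local Open Scope ring_scope.


Section GraphLemmas.
Variables (n m : nat) (src tgt : 'I_m -> 'I_n).

Local Notation adj := (adjb src tgt).

Lemma adjbP (X : {set 'I_m}) u v : reflect (exists2 e, e \in X &
   ((src e == u) && (tgt e == v)) || ((src e == v) && (tgt e == u))) (adj X u v).
Proof. exact: exists_inP. Qed.

Lemma adjb_sym (X : {set 'I_m}) : symmetric (adj X).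
Proof.
move=> u v; apply/adjbP/adjbP => -[e He H]; exists e => //; by rewrite orbC.
Qed.

Lemma csym (X : {set 'I_m}) : connect_sym (adj X).
Proof. exact/sym_connect_sym/adjb_sym. Qed.

Lemma adjb_edge (X : {set 'I_m}) e : e \in X -> adj X (src e) (tgt e).
Proof. by move=> He; apply/adjbP; exists e => //; rewrite !eqxx. Qed.

Lemma adjb_sub (X Y : {set 'I_m}) : X \subset Y -> subrel (adj X) (adj Y).
Proof.
move=> sXY u v /adjbP[e He H]; apply/adjbP; exists e => //; exact: (subsetP sXY _ He).
Qed.

Lemma conn_sub (X Y : {set 'I_m}) : X \subset Y -> subrel (connect (adj X)) (connect (adj Y)).
Proof.
move=> sXY; apply: connect_sub => u v h; apply: connect1; exact: adjb_sub h.
Qed.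

Lemma ncomp_eq (X : {set 'I_m}) : (forall e, e \notin X -> connect (adj X) (src e) (tgt e)) ->
  ncomp src tgt X = ncomp src tgt setT.
Proof.
move=> hX; rewrite /ncomp; apply: eq_n_comp => x y; apply/idP/idP.
  by apply: conn_sub; apply: subsetT.
apply: connect_sub => u v /adjbP[e _ H].
case He: (e \in X).
  by apply: connect1; apply/adjbP; exists e.
have := hX e (negbT He).
by case/orP: H => /andP[/eqP <- /eqP <-] //; rewrite csym.
Qed.

Lemma ncomp_card (X : {set 'I_m}) : ncomp src tgt X = #|[set z | roots (adj X) z]|.
Proof. by apply: eq_card => z; rewrite !inE andbT. Qed.

Lemma ncomp_lt (X : {set 'I_m}) x y : connect (adj setT) x y -> ~~ connect (adj X) x y ->
  (ncomp src tgt setT < ncomp src tgt X)%N.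
Proof.
move=> cxy ncxy; rewrite !ncomp_card.
set r := fingraph.root (adj setT).
have E : [set z | roots (adj setT) z] = r @: [set z | roots (adj X) z].
  apply/setP => z; rewrite inE; apply/idP/imsetP.
    move/eqP => <-; exists (fingraph.root (adj X) z); first by rewrite inE roots_root //; apply: csym.
    apply/fingraph.rootP; first exact: csym.
    apply: (conn_sub (subsetT X)); exact: connect_root.
  by case=> w _ ->; rewrite /r roots_root //; apply: csym.
rewrite E ltn_neqAle leq_imset_card andbT; apply/negP => /imset_injP inj.
have h1 : fingraph.root (adj X) x \in [set z | roots (adj X) z] by rewrite inE roots_root //; apply: csym.
have h2 : fingraph.root (adj X) y \in [set z | roots (adj X) z] by rewrite inE roots_root //; apply: csym.
have := inj _ _ h1 h2.
have e1 : r (fingraph.root (adj X) x) = r x.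
  apply/esym/fingraph.rootP; first exact: csym.
  apply: (conn_sub (subsetT X)); exact: connect_root.
have e2 : r (fingraph.root (adj X) y) = r y.
  apply/esym/fingraph.rootP; first exact: csym.
  apply: (conn_sub (subsetT X)); exact: connect_root.
have ex : r x = r y by exact: (fingraph.rootP (csym _) cxy).
rewrite e1 e2 ex => /(_ erefl) /fingraph.rootP.
by move=> /(_ (csym X)); rewrite (negbTE ncxy).
Qed.

End GraphLemmas.


Ltac bfin := intros; match goal with H : is_true true -> is_true false |- _ => by move: (H isT) end.

Section Cuts.
Variables (R : realType) (n m : nat) (src tgt : 'I_m -> 'I_n).
Local Notation adj := (adjb src tgt).
Implicit Types (A B : {set 'I_n}) (C X : {set 'I_m}).
Local Notation gclosed e a := (fingraph.closed_mem e (mem a)).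

Definition dcut (A : {set 'I_n}) : {set 'I_m} := [set e | (src e \in A) != (tgt e \in A)].
Definition chiF (A : {set 'I_n}) (e : 'I_m) : R := (src e \in A)%:R - (tgt e \in A)%:R.
Definition comp (C : {set 'I_m}) x : {set 'I_n} := [set z | connect (adj (~: C)) x z].

Lemma cl_dcut A : gclosed (adj (~: dcut A)) A.
Proof.
move=> u v /adjbP[e]; rewrite !inE negbK => /eqP he.
by case/orP => /andP[/eqP <- /eqP <-].
Qed.

Lemma cl_comp C x : gclosed (adj (~: C)) (comp C x).
Proof. by move=> u v h; rewrite !inE; exact: (connect_closed (csym _ _ _) x h). Qed.

Lemma comp_sub C x (A : {set 'I_n}) : gclosed (adj (~: C)) A -> x \in A -> comp C x \subset A.
Proof.
move=> clA xA; apply/subsetP => z; rewrite inE => cz.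
by rewrite -(closed_connect clA cz).
Qed.

Lemma comp_self C x : x \in comp C x.
Proof. by rewrite inE connect0. Qed.

Lemma dcut_closed A B : gclosed (adj (~: dcut A)) B -> dcut B \subset dcut A.
Proof.
move=> clB; apply/subsetP => e; apply: contraLR => he.
have h : adj (~: dcut A) (src e) (tgt e) by apply: adjb_edge; rewrite inE.
by rewrite !inE negbK (clB _ _ h).
Qed.

Lemma chiF_split A (A1 : {set 'I_n}) e : A1 \subset A -> chiF A e = chiF A1 e + chiF (A :\: A1) e.
Proof.
move=> sub; move: (subsetP sub (src e)) (subsetP sub (tgt e)); rewrite /chiF !inE.
case: (src e \in A1); case: (src e \in A); case: (tgt e \in A1); case: (tgt e \in A);
  move=> //= h1 h2; try (by have := h1 isT); try (by have := h2 isT); ring.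
Qed.

Lemma chiF_compl A e : chiF (~: A) e = - chiF A e.
Proof. rewrite /chiF !inE; case: (src e \in A); case: (tgt e \in A) => /=; ring. Qed.

Lemma chiF0 A e : e \notin dcut A -> chiF A e = 0.
Proof. by rewrite inE negbK /chiF => /eqP ->; rewrite subrr. Qed.

Lemma dcutC A : dcut (~: A) = dcut A.
Proof. by apply/setP => e; rewrite !inE; case: (src e \in A); case: (tgt e \in A). Qed.


Definition cutsum (I : 'rV[R]_m) A := \sum_e I 0 e * chiF A e.

Lemma cutsumC I A : cutsum I (~: A) = - cutsum I A.
Proof.
by rewrite /cutsum -sumrN; apply: eq_bigr => e _; rewrite chiF_compl mulrN.
Qed.

Lemma cutsum0 I A : dcut A = set0 -> cutsum I A = 0.
Proof. by move=> d0; rewrite /cutsum big1 // => e _; rewrite chiF0 ?mulr0 // d0 in_set0. Qed.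

Lemma reduce (I : 'rV[R]_m) A x e0 :
  e0 \in dcut A -> x \in A -> (x == src e0) || (x == tgt e0) ->
  (forall A', (#|dcut A'| < #|dcut A|)%N -> cutsum I A' = 0) ->
  cutsum I A = 0 \/
  (cutsum I A = cutsum I (comp (dcut A) x) /\ dcut (comp (dcut A) x) = dcut A).
Proof.
move=> he0 xA hx IH.
set A1 := comp (dcut A) x.
have clA1 : gclosed (adj (~: dcut A)) A1 by move=> u v; apply: cl_comp.
have sA1 : A1 \subset A := comp_sub (cl_dcut (A:=A)) xA.
have x1 : x \in A1 by apply: comp_self.
clearbody A1.
set A2 := A :\: A1.
have clA2 : gclosed (adj (~: dcut A)) A2.
  by move=> u v h; rewrite !in_setD (clA1 _ _ h) (cl_dcut h).
have s1 : dcut A1 \subset dcut A := dcut_closed clA1.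
have s2 : dcut A2 \subset dcut A := dcut_closed clA2.
have spl : cutsum I A = cutsum I A1 + cutsum I A2.
  by rewrite /cutsum -big_split; apply: eq_bigr => e _; rewrite (chiF_split e sA1) mulrDr.
case: (set_0Vmem (dcut A2)) => [d0 | [e1 he1]].
  right; split; first by rewrite spl (cutsum0 I d0) addr0.
  apply/eqP; rewrite eqEsubset s1 /=; apply/subsetP => e he.
  have : e \notin dcut A2 by rewrite d0 in_set0.
  move: he (subsetP sA1 (src e)) (subsetP sA1 (tgt e)); rewrite /A2 !inE.
  by case: (src e \in A1); case: (src e \in A); case: (tgt e \in A1); case: (tgt e \in A) => //= _ h; have := h isT.
left; rewrite spl !IH ?addr0 //; apply: proper_card; apply/properP; split => //.
  exists e0 => //.
  move: he0 (subsetP sA1 (src e0)) (subsetP sA1 (tgt e0)) x1; rewrite /A2 !inE.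
  by case/orP: hx => /eqP ->;
    case: (src e0 \in A1); case: (src e0 \in A); case: (tgt e0 \in A1); case: (tgt e0 \in A) => //=;
    try bfin.
exists e1; first exact: (subsetP s2 _ he1).
move: he1 (subsetP s2 _ he1) (subsetP sA1 (src e1)) (subsetP sA1 (tgt e1)); rewrite /A2 !inE.
by case: (src e1 \in A1); case: (src e1 \in A); case: (tgt e1 \in A1); case: (tgt e1 \in A) => //=; try bfin.
Qed.

Lemma bond_cut C x y : dcut (comp C x) = C -> dcut (comp C y) = C ->
  connect (adj setT) x y -> ~~ connect (adj (~: C)) x y -> is_cutset src tgt C.
Proof.
move=> DA DB cxy nxy.
have conA : forall z, z \in comp C x -> connect (adj (~: C)) x z by move=> z; rewrite inE.
have conB : forall z, z \in comp C y -> connect (adj (~: C)) y z by move=> z; rewrite inE.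
have disj : forall z, z \in comp C x -> z \in comp C y -> False.
  move=> z /conA cz /conB; rewrite csym => cz'.
  by move: nxy; rewrite (connect_trans cz cz').
move: DA DB conA conB disj; set A1 := comp C x; set B1 := comp C y.
clearbody A1 B1 => DA DB conA conB disj.
have ends : forall e, e \in C ->
    ((src e \in A1) && (tgt e \in B1)) || ((src e \in B1) && (tgt e \in A1)).
  move=> e he; move: (he) (he); rewrite -{1}DA -DB !inE.
  move: (disj (src e)) (disj (tgt e)).
  by case: (src e \in A1); case: (src e \in B1); case: (tgt e \in A1); case: (tgt e \in B1) => //= h1 h2;
    try (by case: (h1 isT isT)); try (by case: (h2 isT isT)).
apply/andP; split; first exact: ncomp_lt cxy nxy.
apply/forallP => C'; apply/implyP => /properP [sub [f fC fC']].
rewrite (@ncomp_eq _ _ src tgt (~: C')) ?ltnn //.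
move=> e; rewrite inE negbK => eC'.
have G : subrel (connect (adj (~: C))) (connect (adj (~: C'))).
  by apply: conn_sub; rewrite setCS.
have adjf : adj (~: C') (src f) (tgt f) by apply: adjb_edge; rewrite inE.
have fxy : connect (adj (~: C')) x y.
  case/orP: (ends f fC) => /andP[fa fb].
    apply: connect_trans (G _ _ (conA _ fa)) _.
    apply: connect_trans (connect1 adjf) _.
    by rewrite csym; apply: G; apply: conB.
  apply: connect_trans (G _ _ (conA _ fb)) _.
  rewrite adjb_sym in adjf.
  apply: connect_trans (connect1 adjf) _.
  by rewrite csym; apply: G; apply: conB.
have cx : forall z, (z \in A1) || (z \in B1) -> connect (adj (~: C')) x z.
  move=> z /orP[zA|zB]; first exact: G (conA z zA).
  exact: connect_trans fxy (G _ _ (conB z zB)).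
have [hs ht] : ((src e \in A1) || (src e \in B1)) /\ ((tgt e \in A1) || (tgt e \in B1)).
  by case/orP: (ends e (subsetP sub e eC')) => /andP[-> ->]; rewrite ?orbT.
by apply: connect_trans (cx _ ht); rewrite csym; apply: cx.
Qed.

Lemma cut_orth (I : 'rV[R]_m) :
  (forall u, cutset_vec src tgt u -> \sum_e I 0 e * u 0 e = 0) ->
  forall A, cutsum I A = 0.
Proof.
move=> hcut.
suff H : forall k A, (#|dcut A| < k)%N -> cutsum I A = 0 by move=> A; exact: (H _ A (ltnSn _)).
elim=> [//|k IH] A; rewrite ltnS => hk.
have IH' : forall A', (#|dcut A'| < #|dcut A|)%N -> cutsum I A' = 0.
  by move=> A' h; apply: IH; exact: leq_trans h hk.
case: (set_0Vmem (dcut A)) => [d0 | [e0 he0]]; first exact: cutsum0.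
pose x := if src e0 \in A then src e0 else tgt e0.
pose y := if src e0 \in A then tgt e0 else src e0.
have [xA yA] : x \in A /\ y \notin A.
  by move: he0; rewrite inE /x /y; case hs: (src e0 \in A); case ht: (tgt e0 \in A); rewrite /= ?hs ?ht.
have hx : (x == src e0) || (x == tgt e0) by rewrite /x; case: ifP; rewrite eqxx ?orbT.
have hy : (y == src e0) || (y == tgt e0) by rewrite /y; case: ifP; rewrite eqxx ?orbT.
have hxy : adj setT x y.
  apply/adjbP; exists e0; first by rewrite inE.
  by rewrite /x /y; case: ifP; rewrite !eqxx ?orbT.
case: (reduce he0 xA hx IH') => [//|[E1 D1]].
have x1 : x \in comp (dcut A) x by apply: comp_self.
have y1 : y \notin comp (dcut A) x.
  by apply: contra yA; apply: (subsetP (comp_sub (cl_dcut (A:=A)) xA)).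
have nxy : ~~ connect (adj (~: dcut A)) x y by move: y1; rewrite inE.
have he0' : e0 \in dcut (~: comp (dcut A) x) by rewrite dcutC D1.
have yW : y \in ~: comp (dcut A) x by rewrite inE.
have IH'' : forall A', (#|dcut A'| < #|dcut (~: comp (dcut A) x)|)%N -> cutsum I A' = 0.
  by rewrite dcutC D1.
case: (reduce he0' yW hy IH'') => [hW | [E2 D2]].
  by rewrite E1 -[cutsum I _]opprK -cutsumC hW oppr0.
rewrite dcutC D1 in E2 D2.
have cut : is_cutset src tgt (dcut A).
  exact: bond_cut D1 D2 (connect1 hxy) nxy.
rewrite E1 /cutsum; transitivity (\sum_e I 0 e * (\row_e chiF (comp (dcut A) x) e) 0 e); last apply: hcut.
  by apply: eq_bigr => e _; rewrite mxE.
exists (dcut (comp (dcut A) x)), (comp (dcut A) x); split.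
- by rewrite D1.
- by move=> e; rewrite inE.
apply/rowP => e; rewrite !mxE /chiF [e \in dcut _]inE.
by case: (src e \in comp (dcut A) x); case: (tgt e \in comp (dcut A) x) => /=; rewrite ?subr0 ?sub0r ?subrr.
Qed.

End Cuts.


Section Pot.
Variables (R : realType) (n m : nat) (src tgt : 'I_m -> 'I_n).
Local Notation adj := (adjb src tgt).
Local Notation sst := (step_start src tgt).
Local Notation sen := (step_end src tgt).
Implicit Types (X : {set 'I_m}) (d : 'I_m) (x : 'I_n) (p : seq 'I_n).

Definition sgn (s : 'I_m * bool) : R := if s.2 then 1 else -1.

Definition stepOf (d : 'I_m) (X : {set 'I_m}) (a b : 'I_n) : 'I_m * bool :=
  if [pick e in X | (src e == a) && (tgt e == b)] is Some e then (e, true)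
  else if [pick e in X | (src e == b) && (tgt e == a)] is Some e then (e, false)
  else (d, true).

Lemma stepOf_spec d (X : {set 'I_m}) a b : adj X a b ->
  [/\ sst (stepOf d X a b) = a, sen (stepOf d X a b) = b & (stepOf d X a b).1 \in X].
Proof.
move=> /adjbP[e eX he]; rewrite /stepOf.
case: pickP => [f /andP[fX /andP[/eqP sf /eqP tf]] | n1] /=.
  by rewrite /step_start /step_end /=.
case: pickP => [f /andP[fX /andP[/eqP sf /eqP tf]] | n2] /=.
  by rewrite /step_start /step_end /=.
case/orP: he => he.
  by move: (n1 e); rewrite eX he.
by move: (n2 e); rewrite eX he.
Qed.

Lemma st_end (s : 'I_m * bool) : (src s.1 == sst s) || (tgt s.1 == sst s).
Proof. by case: s => e [] /=; rewrite /step_start /= eqxx ?orbT. Qed.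
Lemma se_src (s : 'I_m * bool) : (src s.1 == sst s) || (src s.1 == sen s).
Proof. by case: s => e [] /=; rewrite /step_start /step_end /= eqxx ?orbT. Qed.
Lemma se_tgt (s : 'I_m * bool) : (tgt s.1 == sst s) || (tgt s.1 == sen s).
Proof. by case: s => e [] /=; rewrite /step_start /step_end /= eqxx ?orbT. Qed.

Lemma ps_start d X x p : path (adj X) x p ->
  map sst (pairmap (stepOf d X) x p) = belast x p.
Proof.
elim: p x => //= y p IH x /andP[hxy hp]; rewrite IH //.
by case: (stepOf_spec d hxy) => ->.
Qed.

Lemma ps_inX d X x p : path (adj X) x p ->
  forall s, s \in pairmap (stepOf d X) x p -> s.1 \in X.
Proof.
elim: p x => //= y p IH x /andP[hxy hp] s; rewrite inE => /orP[/eqP -> | hs].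
  by case: (stepOf_spec d hxy).
exact: IH hp s hs.
Qed.

Lemma ps_ends d X x p : path (adj X) x p ->
  forall s, s \in pairmap (stepOf d X) x p -> (src s.1 \in x :: p) && (tgt s.1 \in x :: p).
Proof.
elim: p x => //= y p IH x /andP[hxy hp] s; rewrite inE => /orP[/eqP -> | hs].
  case: (stepOf_spec d hxy) => h1 h2 _.
  move: (se_src (stepOf d X x y)) (se_tgt (stepOf d X x y)); rewrite h1 h2.
  by case/orP => /eqP -> /orP[] /eqP ->; rewrite !inE !eqxx ?orbT.
by case/andP: (IH _ hp s hs) => h1 h2; rewrite !inE in h1 h2 *; rewrite h1 h2 !orbT.
Qed.

Lemma ps_uniq d X x p : path (adj X) x p -> uniq (x :: p) ->
  uniq (map fst (pairmap (stepOf d X) x p)).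
Proof.
elim: p x => //= y p IH x /andP[hxy hp] /andP[nx u].
rewrite IH // andbT; apply/mapP => -[s sin es].
case/andP: (ps_ends hp sin) => h1 h2.
case: (stepOf_spec d hxy) => h3 _ _.
move: (st_end (stepOf d X x y)); rewrite h3 es => /orP[/eqP hx|/eqP hx];
  by move: nx; rewrite -hx ?h1 ?h2.
Qed.

Lemma ps_cycle d X x p : path (adj X) x p -> forall s0 sl, sen s0 = x -> sst sl = last x p ->
  path (fun s1 s2 => sen s1 == sst s2) s0 (rcons (pairmap (stepOf d X) x p) sl).
Proof.
elim: p x => [|y p IH] x /=; first by move=> _ s0 sl -> ->; rewrite eqxx.
move=> /andP[hxy hp] s0 sl h0 hl.
case: (stepOf_spec d hxy) => h3 h4 _.
by rewrite h0 h3 eqxx /=; apply: IH.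
Qed.

Lemma sgnV (V : 'rV[R]_m) (phi : 'I_n -> R) (s : 'I_m * bool) :
  V 0 s.1 = phi (src s.1) - phi (tgt s.1) -> sgn s * V 0 s.1 = phi (sst s) - phi (sen s).
Proof.
by case: s => e [] /= ->; rewrite /sgn /step_start /step_end /=; ring.
Qed.

Lemma ps_sum (V : 'rV[R]_m) (phi : 'I_n -> R) d X x p :
  (forall e, e \in X -> V 0 e = phi (src e) - phi (tgt e)) -> path (adj X) x p ->
  \sum_(s <- pairmap (stepOf d X) x p) sgn s * V 0 s.1 = phi x - phi (last x p).
Proof.
move=> hX; elim: p x => [|y p IH] x /=; first by rewrite big_nil subrr.
move=> /andP[hxy hp]; rewrite big_cons IH //.
case: (stepOf_spec d hxy) => h3 h4 h5.
rewrite (sgnV (hX _ h5)) h3 h4; ring.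
Qed.

Lemma potential (V : 'rV[R]_m) :
  (forall p : seq ('I_m * bool), is_loop src tgt p -> \sum_(s <- p) sgn s * V 0 s.1 = 0) ->
  exists phi : 'I_n -> R, forall e, V 0 e = phi (src e) - phi (tgt e).
Proof.
move=> hl.
suff H : forall k, exists phi : 'I_n -> R,
    forall e : 'I_m, (e < k)%N -> V 0 e = phi (src e) - phi (tgt e).
  by have [phi hphi] := H m; exists phi => e; apply: hphi.
elim=> [|k [phi hphi]]; first by exists (fun _ => 0).
case: (ltnP k m) => hk; last first.
  by exists phi => e he; apply: hphi; exact: leq_trans (ltn_ord e) hk.
pose e0 := Ordinal hk.
pose X := [set e : 'I_m | (e < k)%N].
have hX : forall e, e \in X -> V 0 e = phi (src e) - phi (tgt e).
  by move=> e; rewrite inE; apply: hphi.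
have e0X : e0 \notin X by rewrite inE ltnn.
case cc: (connect (adj X) (tgt e0) (src e0)).
  exists phi => e; rewrite ltnS leq_eqVlt => /orP[/eqP he | he]; last exact: hphi.
  have -> : e = e0 by apply: val_inj.
  move/connectP: cc => [p hp].
  case: (shortenP hp) => p' hp' up' _ hl0.
  pose ps := pairmap (stepOf e0 X) (tgt e0) p'.
  have L : is_loop src tgt ((e0, true) :: ps).
    rewrite /is_loop; apply/and4P; split => //=.
    - rewrite (ps_uniq e0 hp' up') andbT; apply/mapP => -[s sin es].
      by move: e0X; rewrite es (ps_inX hp' sin).
    - rewrite (ps_start _ hp').
      move: up'; rewrite lastI rcons_uniq -hl0.
      by rewrite /step_start /=.
    - by apply: ps_cycle hp' _ _ _ _ => //; rewrite /step_start /step_end /=.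
  have := hl _ L; rewrite big_cons (@ps_sum V phi e0 X (tgt e0) p' hX hp') -hl0 /sgn /= mul1r => h.
  lra.
exists (fun z => phi z + (if connect (adj X) (tgt e0) z
                         then phi (src e0) - phi (tgt e0) - V 0 e0 else 0)) => e.
rewrite ltnS leq_eqVlt => /orP[/eqP he | he].
  have -> : e = e0 by apply: val_inj.
  by rewrite connect0 cc; ring.
have eX : e \in X by rewrite inE.
have h := adjb_edge src tgt eX.
have ->: connect (adj X) (tgt e0) (src e) = connect (adj X) (tgt e0) (tgt e) by exact: (connect_closed (csym src tgt X) (tgt e0) h).
rewrite (hphi _ he); case: (connect (adj X) (tgt e0) (tgt e)); ring.
Qed.
End Pot.


Section Tel.
Variables (R : realType) (n m : nat) (src tgt : 'I_m -> 'I_n).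

Lemma dot_entry (V u : 'rV[R]_m) : (V *m u^T) 0 0 = \sum_e V 0 e * u 0 e.
Proof. by rewrite !mxE; apply: eq_bigr => e _; rewrite !mxE. Qed.

Lemma orth_of_sub r (B : 'M[R]_(r, m)) (V u : 'rV[R]_m) :
  V *m B^T = 0 -> (u <= B)%MS -> \sum_e V 0 e * u 0 e = 0.
Proof.
move=> hVB /submxP[w ->]; rewrite -dot_entry trmx_mul mulmxA hVB mul0mx.
by rewrite mxE.
Qed.

Lemma loop_orth r (B : 'M[R]_(r, m)) (V : 'rV[R]_m) :
  reduced_loop_matrix src tgt B -> V *m B^T = 0 ->
  forall p : seq ('I_m * bool), is_loop src tgt p -> \sum_(s <- p) sgn R s * V 0 s.1 = 0.
Proof.
case=> _ _ hall hVB p hp.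
set u := \row_e \sum_(s <- p | s.1 == e) (if s.2 then 1 else -1) : 'rV[R]_m.
have lv : loop_vec src tgt u by exists p.
rewrite -[RHS](orth_of_sub hVB (hall _ lv)) /u; symmetry.
have E : \sum_e V 0 e * (\row_e \sum_(s <- p | s.1 == e) (if s.2 then 1 else -1) : 'rV[R]_m) 0 e
   = \sum_e \sum_(s <- p) (s.1 == e)%:R * (sgn R s * V 0 e).
  apply: eq_bigr => j _; rewrite mxE mulr_sumr big_mkcond; apply: eq_bigr => s _.
  by case: eqP => _; rewrite /sgn /=; ring.
rewrite E; clear E.
rewrite exchange_big; apply: eq_bigr => s _.
rewrite (bigD1 s.1) //= eqxx mul1r big1 ?addr0 // => j /negbTE hj.
by rewrite eq_sym hj mul0r.
Qed.

Lemma sum_delta (f : 'I_n -> R) a : \sum_z f z * (a \in [set z])%:R = f a.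
Proof.
rewrite (bigD1 a) //= inE eqxx mulr1 big1 ?addr0 // => z hz.
by rewrite inE eq_sym (negbTE hz) mulr0.
Qed.

Lemma tellegen rb rd (B : 'M[R]_(rb, m)) (D : 'M[R]_(rd, m)) (V I : 'rV[R]_m) :
  reduced_loop_matrix src tgt B -> reduced_cutset_matrix src tgt D ->
  V *m B^T = 0 -> I *m D^T = 0 -> V *m I^T = 0.
Proof.
move=> hB hD hVB hID.
have [phi hphi] := potential (loop_orth hB hVB).
have hc : forall A, cutsum src tgt I A = 0.
  apply: cut_orth => u hu; case: hD => _ _ hall.
  exact: (orth_of_sub hID (hall _ hu)).
apply/matrixP => i j; rewrite !ord1 dot_entry mxE.
have H0 : \sum_z phi z * cutsum src tgt I [set z] = 0.
  by apply: big1 => z _; rewrite hc mulr0.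
rewrite -[RHS]H0.
rewrite (eq_bigr (fun z => \sum_e I 0 e * (phi z * chiF R src tgt [set z] e))); last first.
  by move=> z _; rewrite /cutsum mulr_sumr; apply: eq_bigr => e _; ring.
rewrite exchange_big; apply: eq_bigr => e _.
rewrite -mulr_sumr /chiF (eq_bigr (fun z => phi z * (src e \in [set z])%:R - phi z * (tgt e \in [set z])%:R)); last by move=> z _; ring.
by rewrite sumrB !sum_delta hphi mulrC.
Qed.
End Tel.


Section MxGen.
Variable R : fieldType.

Lemma mul_PL a b (x : 'rV[R]_(a + b)) : x *m col_mx 1%:M 0 = lsubmx x.
Proof. by rewrite -{1}[x]hsubmxK mul_row_col mulmx1 mulmx0 addr0. Qed.

Lemma mul_PR a b (x : 'rV[R]_(a + b)) : x *m col_mx 0 1%:M = rsubmx x.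
Proof. by rewrite -{1}[x]hsubmxK mul_row_col mulmx1 mulmx0 add0r. Qed.

Lemma rank_le a b (S : 'M[R]_a) (T : 'M[R]_b) (F : 'M[R]_(a, b)) (G : 'M[R]_(b, a)) :
  (forall x : 'rV_a, (x <= S)%MS -> (x *m F <= T)%MS) ->
  (forall x : 'rV_a, (x <= S)%MS -> x *m F *m G = x) -> (\rank S <= \rank T)%N.
Proof.
move=> hS hG.
have E : S *m F *m G = S by apply/row_matrixP => i; rewrite !row_mul hG // row_sub.
rewrite -{1}E; apply: leq_trans (mxrankM_maxl _ _) _; apply: mxrankS.
by apply/row_subP => i; rewrite row_mul; apply: hS; exact: row_sub.
Qed.

Lemma lin_mat a b (f : 'rV[R]_a -> 'rV[R]_b) :
  (forall k x y, f (k *: x + y) = k *: f x + f y) -> exists M, forall x, f x = x *m M.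
Proof.
move=> hf; have f0 : f 0 = 0.
  by move: (hf 1 0 0); rewrite scaler0 addr0 scale1r => h; apply: (addrI (f 0)); rewrite addr0 -h.
exists (\matrix_(i, j) f (delta_mx 0 i) 0 j) => x.
rewrite {1}[x]row_sum_delta mulmx_sum_row.
have -> : forall (s : seq 'I_a), f (\sum_(j <- s) x 0 j *: delta_mx 0 j) = \sum_(j <- s) x 0 j *: f (delta_mx 0 j).
  elim=> [|j s IH]; first by rewrite !big_nil f0.
  by rewrite !big_cons hf IH.
apply: eq_bigr => j _; congr (_ *: _); apply/rowP => k; rewrite !mxE. by [].
Qed.

Lemma sub_bdiag a b c d (u : 'rV[R]_a) (v : 'rV[R]_b) (A : 'M[R]_(c, a)) (B : 'M[R]_(d, b)) :
  (row_mx u v <= block_mx A 0 0 B)%MS = (u <= A)%MS && (v <= B)%MS.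
Proof.
apply/idP/andP.
  case/submxP => w; rewrite -[w]hsubmxK mul_row_block !mulmx0 addr0 add0r.
  by case/eq_row_mx => -> ->; rewrite !submxMl.
case=> /submxP[w1 ->] /submxP[w2 ->].
have -> : row_mx (w1 *m A) (w2 *m B) = row_mx w1 w2 *m block_mx A 0 0 B.
  by rewrite mul_row_block !mulmx0 addr0 add0r.
exact: submxMl.
Qed.


Definition Sel N (K : {set 'I_N}) : 'M[R]_(N, #|K|) := \matrix_(e, j) (e == enum_val j)%:R.

Lemma mulSelE r N (K : {set 'I_N}) (M : 'M[R]_(r, N)) i j : (M *m Sel K) i j = M i (enum_val j).
Proof.
rewrite !mxE (bigD1 (enum_val j)) //= mxE eqxx mulr1 big1 ?addr0 // => e he.
by rewrite mxE (negbTE he) mulr0.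
Qed.

Lemma subcolsE r N (K : {set 'I_N}) (M : 'M[R]_(r, N)) : subcols K M = M *m Sel K.
Proof. by apply/matrixP => i j; rewrite mulSelE /subcols !mxE. Qed.

Lemma selTsel N (K : {set 'I_N}) : (Sel K)^T *m Sel K = 1%:M.
Proof.
apply/matrixP => j k; rewrite mulSelE !mxE (inj_eq enum_val_inj) eq_sym.
by case: eqP.
Qed.

Lemma selT_out r N (K : {set 'I_N}) (c : 'M[R]_(r, #|K|)) i e :
  e \notin K -> (c *m (Sel K)^T) i e = 0.
Proof.
move=> he; rewrite !mxE big1 // => j _; rewrite !mxE.
case: eqP => [ej | _]; last by rewrite mulr0.
by move: he; rewrite ej enum_valP.
Qed.

Lemma sel_supp N (K : {set 'I_N}) (X : 'rV[R]_N) :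
  (forall e, e \notin K -> X 0 e = 0) -> X *m Sel K *m (Sel K)^T = X.
Proof.
move=> hX; apply/rowP => e; rewrite !mxE.
under eq_bigr do rewrite mulSelE !mxE.
case he: (e \in K); last first.
  rewrite hX ?he // big1 // => j _.
  case: eqP => [ej | _]; last by rewrite mulr0.
  by move: he; rewrite ej enum_valP.
rewrite (bigD1 (enum_rank_in he e)) //= enum_rankK_in // eqxx mulr1 big1 ?addr0 // => j hj.
case: eqP => [ej | _]; last by rewrite mulr0.
have E : enum_rank_in he e = j by apply: enum_val_inj; rewrite enum_rankK_in.
by move: hj; rewrite E eqxx.
Qed.


Lemma supp_mul r N (K : {set 'I_N}) (X : 'rV[R]_N) (M : 'M[R]_(r, N)) :
  (forall e, e \notin K -> X 0 e = 0) -> X *m Sel K *m (M *m Sel K)^T = X *m M^T.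
Proof. by move=> hX; rewrite trmx_mul mulmxA sel_supp. Qed.

End MxGen.


Section Main.
Variables (R : realType) (nm nc nr nu nw nl ng nj rb rd : nat).
Local Notation Q := (nbr4 nm nc nr nu).
Local Notation P := (nbr4 nw nl ng nj).
Variables (Em Zm : 'M[R]_nm) (Ec : 'M[R]_nc) (Rr : 'M[R]_nr) (Rw Yw : 'M[R]_nw)
  (Rl : 'M[R]_nl) (Gg : 'M[R]_ng).
Variables (B : 'M[R]_(rb, Q + P)) (D : 'M[R]_(rd, Q + P)).
Local Notation K := (linK Em Zm Ec Rr Rw Yw Rl Gg B D).

Lemma eqC3 a b c (x : 'rV[R]_a) (y : 'rV[R]_b) (v : 'rV[R]_c) F G :
  (x *m (- F)^T + (v + y *m (- G)^T) == 0) = (v == x *m F^T + y *m G^T).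
Proof.
by rewrite !linearN /= addrCA -opprD subr_eq0.
Qed.

Lemma eqC4 a b c (x : 'rV[R]_a) (y : 'rV[R]_b) (v : 'rV[R]_c) F G :
  (x *m (- F)^T + (y *m (- G)^T + v) == 0) = (v == x *m F^T + y *m G^T).
Proof.
by rewrite !linearN /= addrA addrC -opprD subr_eq0.
Qed.

Lemma eqC5 r (vq : 'rV[R]_Q) (vp : 'rV[R]_P) (M : 'M[R]_(r, Q + P)) :
  vq *m (lsubmx M)^T + vp *m (rsubmx M)^T = row_mx vq vp *m M^T.
Proof. by rewrite -{3}[M]hsubmxK tr_row_mx mul_row_col. Qed.

Lemma kerK (qmc : 'rV[R]_(nm + nc)) (pwl : 'rV[R]_(nw + nl)) (vq iq : 'rV[R]_Q) (vp ip : 'rV[R]_P) :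
  (row_mx qmc (row_mx pwl (row_mx vq (row_mx iq (row_mx vp ip)))) *m K^T == 0) =
  [&& lsubmx iq == 0, lsubmx vp == 0,
      vq == qmc *m (Fq nr nu Em Ec)^T + iq *m (Fi nc nu Zm Rr)^T,
      ip == pwl *m (Gp ng nj Rw Rl)^T + vp *m (Gv nl nj Yw Gg)^T,
      row_mx vq vp *m B^T == 0 & row_mx iq ip *m D^T == 0].
Proof.
rewrite -eqC3 -eqC4 -!eqC5.
rewrite /linK !tr_col_mx !mul_mx_row !row_mx_eq0 !tr_row_mx !mul_row_col.
by rewrite !trmx0 !mulmx0 ?trmx1 ?mulmx1 !add0r ?addr0 ?mul_PL.
Qed.

Lemma Fq_mul (qm : 'rV[R]_nm) (qc : 'rV[R]_nc) :
  row_mx qm qc *m (Fq nr nu Em Ec)^T = row_mx (row_mx (qm *m Em^T) (qc *m Ec^T)) (0 : 'rV_(nr + nu)).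
Proof.
by rewrite /Fq tr_col_mx tr_block_mx !trmx0 mul_mx_row mul_row_block !mulmx0 addr0 add0r.
Qed.

Lemma Fi_mul (im : 'rV[R]_nm) (ic : 'rV[R]_nc) (ir : 'rV[R]_nr) (iu : 'rV[R]_nu) :
  row_mx (row_mx im ic) (row_mx ir iu) *m (Fi nc nu Zm Rr)^T =
  row_mx (row_mx (im *m Zm^T) 0) (row_mx (ir *m Rr^T) 0).
Proof.
by rewrite /Fi !tr_block_mx !trmx0 !mul_row_block !mulmx0 !addr0 !add0r.
Qed.

Lemma Gp_mul (pw : 'rV[R]_nw) (pl : 'rV[R]_nl) :
  row_mx pw pl *m (Gp ng nj Rw Rl)^T = row_mx (row_mx (pw *m Rw^T) (pl *m Rl^T)) (0 : 'rV_(ng + nj)).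
Proof.
by rewrite /Gp tr_col_mx tr_block_mx !trmx0 mul_mx_row mul_row_block !mulmx0 addr0 add0r.
Qed.

Lemma Gv_mul (vw : 'rV[R]_nw) (vl : 'rV[R]_nl) (vg : 'rV[R]_ng) (vj : 'rV[R]_nj) :
  row_mx (row_mx vw vl) (row_mx vg vj) *m (Gv nl nj Yw Gg)^T =
  row_mx (row_mx (vw *m Yw^T) 0) (row_mx (vg *m Gg^T) 0).
Proof.
by rewrite /Gv !tr_block_mx !trmx0 !mul_row_block !mulmx0 !addr0 !add0r.
Qed.

Local Notation VL := (VLset nm nc nr nu nw nl ng nj).
Local Notation IC := (ICset nm nc nr nu nw nl ng nj).

Lemma VL_supp (iu : 'rV[R]_nu) (il : 'rV[R]_nl) e : e \notin VL ->
  (row_mx (row_mx (row_mx 0 0) (row_mx 0 iu)) (row_mx (row_mx 0 il) (row_mx (0 : 'rV_ng) (0 : 'rV_nj)))) 0 e = 0.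
Proof.
rewrite /VLset /brange !inE => he.
rewrite mxE; case: splitP => j ej; rewrite mxE; case: splitP => k ek; rewrite mxE;
  case: splitP => l el; rewrite ?mxE //; exfalso; move: he; apply/negP/negPn;
  rewrite ej ?ek ?el; move: (ltn_ord l) (ltn_ord k) (ltn_ord j); lia.
Qed.


Lemma IC_supp (vc : 'rV[R]_nc) (vj : 'rV[R]_nj) e : e \notin IC ->
  (row_mx (row_mx (row_mx (0 : 'rV_nm) vc) (row_mx (0 : 'rV_nr) (0 : 'rV_nu))) (row_mx (row_mx (0 : 'rV_nw) (0 : 'rV_nl)) (row_mx 0 vj))) 0 e = 0.
Proof.
rewrite /ICset /brange !inE => he.
rewrite mxE; case: splitP => j ej; rewrite mxE; case: splitP => k ek; rewrite mxE;
  case: splitP => l el; rewrite ?mxE //; exfalso; move: he; apply/negP/negPn;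
  rewrite ej ?ek ?el; move: (ltn_ord l) (ltn_ord k) (ltn_ord j); lia.
Qed.

Lemma VL_form (X : 'rV[R]_(Q + P)) : (forall e, e \notin VL -> X 0 e = 0) ->
  X = row_mx (row_mx (row_mx 0 0) (row_mx 0 (rsubmx (rsubmx (lsubmx X)))))
             (row_mx (row_mx 0 (rsubmx (lsubmx (rsubmx X)))) (row_mx 0 0)).
Proof.
move=> hX; apply/rowP => e.
rewrite mxE; case: splitP => j ej; rewrite mxE; case: splitP => k ek; rewrite mxE;
  case: splitP => l el; rewrite ?mxE;
  (apply: hX; rewrite /VLset /brange !inE; apply/negP;
   rewrite ej ?ek ?el; move: (ltn_ord l) (ltn_ord k) (ltn_ord j); lia) ||
  (congr (X 0 _); apply: val_inj => /=; move: (ltn_ord l) (ltn_ord k) (ltn_ord j); lia).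
Qed.

Lemma IC_form (X : 'rV[R]_(Q + P)) : (forall e, e \notin IC -> X 0 e = 0) ->
  X = row_mx (row_mx (row_mx 0 (rsubmx (lsubmx (lsubmx X)))) (row_mx 0 0))
             (row_mx (row_mx 0 0) (row_mx 0 (rsubmx (rsubmx (rsubmx X))))).
Proof.
move=> hX; apply/rowP => e.
rewrite mxE; case: splitP => j ej; rewrite mxE; case: splitP => k ek; rewrite mxE;
  case: splitP => l el; rewrite ?mxE;
  (apply: hX; rewrite /ICset /brange !inE; apply/negP;
   rewrite ej ?ek ?el; move: (ltn_ord l) (ltn_ord k) (ltn_ord j); lia) ||
  (congr (X 0 _); apply: val_inj => /=; move: (ltn_ord l) (ltn_ord k) (ltn_ord j); lia).
Qed.



Lemma pd_ge0 k (M : 'M[R]_k) (u : 'rV[R]_k) : posdef M -> 0 <= (u *m M *m u^T) 0 0.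
Proof.
move=> hM; case: (eqVneq u 0) => [-> | h]; last exact: ltW (hM u h).
by rewrite !mul0mx mxE.
Qed.

Lemma pd_eq0 k (M : 'M[R]_k) (u : 'rV[R]_k) : posdef M -> (u *m M *m u^T) 0 0 = 0 -> u = 0.
Proof.
move=> hM E; case: (eqVneq u 0) => // h.
by have := hM u h; rewrite E ltxx.
Qed.

Lemma quad_tr k (M : 'M[R]_k) (u : 'rV[R]_k) : (u *m M^T *m u^T) 0 0 = (u *m M *m u^T) 0 0.
Proof.
transitivity ((u *m M^T *m u^T)^T 0 0); first by rewrite [RHS]mxE.
by rewrite !trmx_mul !trmxK mulmxA.
Qed.

Lemma row_mx_case a b (x : 'rV[R]_(a + b)) : exists u v, x = row_mx u v.
Proof. by exists (lsubmx x), (rsubmx x); rewrite hsubmxK. Qed.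

Lemma eq_row_mxb a b (u1 u2 : 'rV[R]_a) (v1 v2 : 'rV[R]_b) :
  (row_mx u1 v1 == row_mx u2 v2) = (u1 == u2) && (v1 == v2).
Proof. by rewrite -subr_eq0 opp_row_mx add_row_mx row_mx_eq0 !subr_eq0. Qed.

Lemma row_mx_lin a b k (u1 u2 : 'rV[R]_a) (v1 v2 : 'rV[R]_b) :
  row_mx (k *: u1 + u2) (k *: v1 + v2) = k *: row_mx u1 v1 + row_mx u2 v2.
Proof. by rewrite scale_row_mx add_row_mx. Qed.

Lemma main (hEm : Em = 0) (hRw : Rw = 0) (hRr : posdef Rr) (hGg : posdef Gg)
  (hEc : Ec \in unitmx) (hRl : Rl \in unitmx)
  (htel : forall V I : 'rV[R]_(Q + P), V *m B^T = 0 -> I *m D^T = 0 -> V *m I^T = 0) :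
  dimker K = (nm + nw + dimker (subcols VL D) + dimker (subcols IC B))%N.
Proof.
rewrite /dimker !subcolsE.
pose T := block_mx (1%:M : 'M[R]_nm) 0 0 (block_mx (1%:M : 'M[R]_nw) 0 0
            (block_mx (kermx (D *m Sel R VL)^T) 0 0 (kermx (B *m Sel R IC)^T))).
have rT : \rank T = (nm + nw + \rank (kermx (D *m Sel R VL)^T) + \rank (kermx (B *m Sel R IC)^T))%N.
  by rewrite /T !rank_diag_block_mx !mxrank1 !addnA.
rewrite -rT.
pose f (x : 'rV[R]_((nm + nc) + ((nw + nl) + (Q + (Q + (P + P)))))) :=
  row_mx (lsubmx (lsubmx x)) (row_mx (lsubmx (lsubmx (rsubmx x)))
    (row_mx (row_mx (lsubmx (rsubmx (rsubmx (rsubmx x)))) (rsubmx (rsubmx (rsubmx (rsubmx (rsubmx x)))))  *m Sel R VL)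
            (row_mx (lsubmx (rsubmx (rsubmx x))) (lsubmx (rsubmx (rsubmx (rsubmx (rsubmx x))))) *m Sel R IC))).
pose g (y : 'rV[R]_(nm + (nw + (#|VL| + #|IC|)))) :=
  row_mx (row_mx (lsubmx y) (rsubmx (lsubmx (lsubmx (rsubmx (rsubmx (rsubmx y)) *m (Sel R IC)^T))) *m invmx Ec^T))
   (row_mx (row_mx (lsubmx (rsubmx y)) (rsubmx (lsubmx (rsubmx (lsubmx (rsubmx (rsubmx y)) *m (Sel R VL)^T))) *m invmx Rl^T))
     (row_mx (lsubmx (rsubmx (rsubmx (rsubmx y)) *m (Sel R IC)^T))
       (row_mx (lsubmx (lsubmx (rsubmx (rsubmx y)) *m (Sel R VL)^T))
         (row_mx (rsubmx (rsubmx (rsubmx (rsubmx y)) *m (Sel R IC)^T)) (rsubmx (lsubmx (rsubmx (rsubmx y)) *m (Sel R VL)^T)))))).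
have flin : forall k x y, f (k *: x + y) = k *: f x + f y.
  move=> k x y; rewrite /f !linearP /=.
  by rewrite !row_mx_lin !mulmxDl -!scalemxAl !row_mx_lin.
have glin : forall k x y, g (k *: x + y) = k *: g x + g y.
  move=> k x y; rewrite /g !linearP /= !mulmxDl -!scalemxAl !linearP /=.
  by rewrite !mulmxDl -!scalemxAl !row_mx_lin.
have [F hF] := lin_mat flin.
have [G hG] := lin_mat glin.
have Sdir : forall x, (x <= kermx K^T)%MS -> (f x <= T)%MS /\ g (f x) = x.
  move=> x; rewrite sub_kermx.
  case: (row_mx_case x) => qmc [x1 ->]; case: (row_mx_case qmc) => qm [qc ->].
  case: (row_mx_case x1) => pwl [x2 ->]; case: (row_mx_case pwl) => pw [pl ->].
  case: (row_mx_case x2) => vq [x3 ->]; case: (row_mx_case x3) => iq [x4 ->].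
  case: (row_mx_case x4) => vp [ip ->].
  case: (row_mx_case vq) => vq1 [vq2 ->]; case: (row_mx_case vq1) => vm [vc ->]; case: (row_mx_case vq2) => vr [vu ->].
  case: (row_mx_case iq) => iq1 [iq2 ->]; case: (row_mx_case iq1) => im [ic ->]; case: (row_mx_case iq2) => ir [iu ->].
  case: (row_mx_case vp) => vp1 [vp2 ->]; case: (row_mx_case vp1) => vw [vl ->]; case: (row_mx_case vp2) => vg [vj ->].
  case: (row_mx_case ip) => ip1 [ip2 ->]; case: (row_mx_case ip1) => iw [il ->]; case: (row_mx_case ip2) => ig [ij ->].
  rewrite kerK !row_mxKl Fq_mul Fi_mul Gp_mul Gv_mul !add_row_mx !eq_row_mxb !row_mx_eq0 hEm hRw !trmx0 !mulmx0 !addr0 !add0r !eq_row_mxb.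
  move=> /andP[/andP[/eqP im0 /eqP ic0] /and5P[/andP[/eqP vw0 /eqP vl0] /andP[/andP[/eqP evm /eqP evc] /andP[/eqP evr /eqP evu]] /andP[/andP[/eqP eiw /eqP eil] /andP[/eqP eig /eqP eij]] /eqP hB /eqP hD]].
  subst im ic vw vl vu ij; rewrite mul0mx in evm eiw; subst vm iw vr ig.
  have tel := htel _ _ hB hD.
  rewrite !tr_row_mx !mul_row_col !trmx0 !mulmx0 !mul0mx !addr0 !add0r in tel.
  move/matrixP: tel => /(_ 0 0); rewrite mxE [X in X + _ = _]quad_tr trmx_mul trmxK mulmxA [RHS]mxE.
  move=> tel.
  have a0 := pd_ge0 ir hRr; have b0 := pd_ge0 vg hGg.
  have ir0 : ir = 0 by apply: (pd_eq0 hRr); lra.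
  have vg0 : vg = 0 by apply: (pd_eq0 hGg); lra.
  subst ir vg; rewrite !mul0mx in hB hD *.
  split.
    rewrite /f !(row_mxKl, row_mxKr) /T !sub_bdiag !submx1 /= !sub_kermx.
    rewrite supp_mul; last by move=> e he; apply: VL_supp.
    rewrite supp_mul; last by move=> e he; apply: IC_supp.
    by apply/andP; split; apply/eqP; [exact: hD | exact: hB].
  rewrite /g /f !(row_mxKl, row_mxKr).
  rewrite (@sel_supp _ _ VL); last by move=> e he; apply: VL_supp.
  rewrite (@sel_supp _ _ IC); last by move=> e he; apply: IC_supp.
  rewrite !(row_mxKl, row_mxKr).
  by rewrite evc eil !mulmxK ?unitmx_tr.
have Tdir : forall y, (y <= T)%MS -> (g y <= kermx K^T)%MS /\ f (g y) = y.
  move=> y; case: (row_mx_case y) => a [y1 ->]; case: (row_mx_case y1) => b [y2 ->].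
  case: (row_mx_case y2) => c [d ->].
  rewrite /T !sub_bdiag !submx1 /= !sub_kermx => /andP[/eqP hc /eqP hd].
  have [iu [il eI]] : exists iu il, c *m (Sel R VL)^T = row_mx (row_mx (row_mx 0 0) (row_mx 0 iu))
             (row_mx (row_mx 0 il) (row_mx 0 0)).
    by do 2 eexists; apply: VL_form => e he; apply: selT_out.
  have [vc [vj eV]] : exists vc vj, d *m (Sel R IC)^T = row_mx (row_mx (row_mx 0 vc) (row_mx 0 0))
             (row_mx (row_mx 0 0) (row_mx 0 vj)).
    by do 2 eexists; apply: IC_form => e he; apply: selT_out.
  split.
    rewrite /g !(row_mxKl, row_mxKr) eI eV !(row_mxKl, row_mxKr).
    rewrite kerK !(row_mxKl, row_mxKr) Fq_mul Fi_mul Gp_mul Gv_mul hEm hRw.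
    rewrite !mulmxKV ?unitmx_tr // -eV -eI -!mulmxA -!trmx_mul hc hd !trmx0 !mulmx0 !mul0mx.
    by rewrite !add_row_mx !addr0 !add0r !row_mx0 !eqxx.
  by rewrite /f /g !(row_mxKl, row_mxKr, hsubmxK) -!mulmxA !selTsel !mulmx1.
apply/eqP; rewrite eqn_leq; apply/andP; split.
  apply: (rank_le (F := F) (G := G)) => x hx.
    by rewrite -hF; case: (Sdir x hx).
  by rewrite -hF -hG; case: (Sdir x hx).
apply: (rank_le (F := G) (G := F)) => y hy.
  by rewrite -hG; case: (Tdir y hy).
by rewrite -hG -hF; case: (Tdir y hy).
Qed.

End Main.

End Aux.

Theorem theorem3
  (R : realType) (n nm nc nr nu nw nl ng nj rb rd : nat)
  (* the circuit digraph; branches ordered m, c, r, u | w, l, g, j *)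
  (src tgt : 'I_(nbr4 nm nc nr nu + nbr4 nw nl ng nj) -> 'I_n)
  (B : 'M[R]_(rb, nbr4 nm nc nr nu + nbr4 nw nl ng nj))
  (D : 'M[R]_(rd, nbr4 nm nc nr nu + nbr4 nw nl ng nj))
  (hB : reduced_loop_matrix src tgt B)
  (hD : reduced_cutset_matrix src tgt D)
  (* device characteristics *)
  (eta1 : 'rV[R]_nm -> 'rV[R]_nm -> R -> 'rV[R]_nm)
  (eta2 : 'rV[R]_nc -> R -> 'rV[R]_nc)
  (eta3 : 'rV[R]_nr -> R -> 'rV[R]_nr)
  (eta4 : R -> 'rV[R]_nu)
  (zeta1 : 'rV[R]_nw -> 'rV[R]_nw -> R -> 'rV[R]_nw)
  (zeta2 : 'rV[R]_nl -> R -> 'rV[R]_nl)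
  (zeta3 : 'rV[R]_ng -> R -> 'rV[R]_ng)
  (zeta4 : R -> 'rV[R]_nj)
  (* memristors: partial derivatives not identically zero *)
  (hm1 : (0 < nm)%N -> exists q i t, jac (fun q' => eta1 q' i t) q != 0)
  (hm2 : (0 < nm)%N -> exists q i t, jac (fun i' => eta1 q i' t) i != 0)
  (hw1 : (0 < nw)%N -> exists p v t, jac (fun p' => zeta1 p' v t) p != 0)
  (hw2 : (0 < nw)%N -> exists p v t, jac (fun v' => zeta1 p v' t) v != 0)
  (* the equilibrium *)
  (qmc : 'rV[R]_(nm + nc)) (pwl : 'rV[R]_(nw + nl))
  (vq iq : 'rV[R]_(nbr4 nm nc nr nu)) (vp ip : 'rV[R]_(nbr4 nw nl ng nj)) (t0 : R)
  (heq : equilibrium B D eta1 eta2 eta3 eta4 zeta1 zeta2 zeta3 zeta4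
                     qmc pwl vq iq vp ip t0) :
  let qm := lsubmx qmc in let qc := rsubmx qmc in
  let pw := lsubmx pwl in let pl := rsubmx pwl in
  let im := lsubmx (lsubmx iq) in let ir := lsubmx (rsubmx iq) in
  let vw := lsubmx (lsubmx vp) in let vg := lsubmx (rsubmx vp) in
  let Em := jac (fun q => eta1 q im t0) qm in
  let Zm := jac (fun i => eta1 qm i t0) im in
  let Ec := jac (fun q => eta2 q t0) qc in
  let Rr := jac (fun i => eta3 i t0) ir in
  let Rw := jac (fun p => zeta1 p vw t0) pw in
  let Yw := jac (fun v => zeta1 pw v t0) vw in
  let Rl := jac (fun p => zeta2 p t0) pl in
  let Gg := jac (fun v => zeta3 v t0) vg in
  (* differentiability (C^1 regularity) of the device maps at the equilibrium *)
  differentiable (fun q => eta1 q im t0) qm ->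
  differentiable (fun i => eta1 qm i t0) im ->
  differentiable (fun q => eta2 q t0) qc ->
  differentiable (fun i => eta3 i t0) ir ->
  differentiable (fun p => zeta1 p vw t0) pw ->
  differentiable (fun v => zeta1 pw v t0) vw ->
  differentiable (fun p => zeta2 p t0) pl ->
  differentiable (fun v => zeta3 v t0) vg ->
  (* hypotheses of the theorem at the equilibrium *)
  Em = 0 -> Rw = 0 ->
  posdef Rr -> posdef Gg ->
  Ec \in unitmx -> Rl \in unitmx ->
  dimker (linK Em Zm Ec Rr Rw Yw Rl Gg B D)
  = (nm + nw + dimker (subcols (VLset nm nc nr nu nw nl ng nj) D)
             + dimker (subcols (ICset nm nc nr nu nw nl ng nj) B))%N.
Proof.
move=> qm qc pw pl im ir vw vg Em Zm Ec Rr Rw Yw Rl Gg _ _ _ _ _ _ _ _ hEm hRw hRr hGg hEc hRl.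
apply: Aux.main => //.
move=> V I hVB hID; exact: (Aux.tellegen hB hD hVB hID).
Qed.
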